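(* Let $\mathcal{J}$ be a simple input set for Machine Covering on $m$ machines. Then for every arrival order of $\mathcal{J}$, the Greedy-strategy produces a schedule with minimum load at least $\frac{\mathrm{OPT}(\mathcal{J})}{100\sqrt[4]{m}}$.
   Context: Machine Covering: $n$ jobs with non-negative sizes are assigned to $m$ identical parallel machines, maximizing the minimum machine load; $\mathrm{OPT}(\mathcal{J})$ is the optimal offline minimum load. The Greedy-strategy processes jobs in arrival order and assigns each to a currently least loaded machine (ties broken arbitrarily). A job is called large if its size exceeds $\frac{\mathrm{OPT}(\mathcal{J})}{100\sqrt[4]{m}}$ and small otherwise; $k$ is the number of large jobs in $\mathcal{J}$. The input set $\mathcal{J}$ is called simple if $n<m$, or $k\ge m$, or $k\le m-\frac{m^{3/4}}{50}$. *)

(* Defs.v *)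
From HB Require Import structures.
From mathcomp Require Import all_boot all_order all_algebra.
Set Implicit Arguments. Unset Strict Implicit. Unset Printing Implicit Defensive.
Import Order.TTheory GRing.Theory Num.Theory.
Local Open Scope ring_scope.

Section MachineCovering.
Variable R : rcfType.

(* An input (multi)set of jobs is a sequence of sizes; a sequence also fixes
   an arrival order. An assignment maps job indices to machines 'I_m. *)

Definition load (s : seq R) (m : nat) (f : 'I_(size s) -> 'I_m) (i : 'I_m) : R :=
  \sum_(j < size s | f j == i) s`_j.

Definition load_before (s : seq R) (m : nat) (f : 'I_(size s) -> 'I_m)
    (t : nat) (i : 'I_m) : R :=
  \sum_(j < size s | (j < t)%N && (f j == i)) s`_j.

(* minimum machine load; the default value (total size) is irrelevant when
   m > 0 and sizes are nonnegative, since every machine load is <= total *)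
Definition min_load (s : seq R) (m : nat) (f : 'I_(size s) -> 'I_m) : R :=
  let tot := \sum_(x <- s) x in
  \big[Num.min/tot]_(i < m) load f i.

(* optimal offline minimum load; the default 0 is irrelevant as min loads
   are nonnegative for nonnegative sizes *)
Definition OPT (s : seq R) (m : nat) : R :=
  \big[Num.max/0]_(f : {ffun 'I_(size s) -> 'I_m}) min_load f.

(* f is a schedule the Greedy-strategy may produce when jobs arrive in the
   order of s: each job goes to a currently least loaded machine (arbitrary
   tie-breaking). *)
Definition greedy_schedule (s : seq R) (m : nat) (f : 'I_(size s) -> 'I_m) : Prop :=
  forall (t : 'I_(size s)) (i : 'I_m), load_before f t (f t) <= load_before f t i.

Definition root4 (m : nat) : R := Num.sqrt (Num.sqrt m%:R).

Definition threshold (J : seq R) (m : nat) : R := OPT J m / (100 * root4 m).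

Definition num_large (J : seq R) (m : nat) : nat :=
  count (fun x => threshold J m < x) J.

(* m^(3/4) = m / m^(1/4) *)
Definition simple_input (J : seq R) (m : nat) : Prop :=
  (size J < m)%N \/ (m <= num_large J m)%N \/
  (num_large J m)%:R <= m%:R - (m%:R / root4 m) / 50.

End MachineCovering.

(* Main.v *)
Require Import Defs.
From HB Require Import structures.
From mathcomp Require Import all_boot all_order all_algebra.
From mathcomp Require Import ring lra zify.
Import Order.TTheory GRing.Theory Num.Theory.
Local Open Scope ring_scope.

Lemma sum_sub (R : rcfType) (I : finType) (P Q : pred I) (F : I -> R) :
  (forall t, P t -> Q t) -> (forall t, Q t -> 0 <= F t) ->
  \sum_(t | P t) F t <= \sum_(t | Q t) F t.
Proof.
move=> PQ F0; rewrite [X in X <= _]big_mkcond [X in _ <= X]big_mkcond /=.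
apply: ler_sum => t _; case: (boolP (P t)) => Pt.
  by rewrite (PQ _ Pt).
by case: ifP => // Qt; apply: F0.
Qed.

Lemma count_card (R : rcfType) (s : seq R) (p : pred R) :
  count p s = #|[set t : 'I_(size s) | p s`_t]|.
Proof.
rewrite -sum1_count (big_nth 0) big_mkord -sum1_card.
by apply: eq_bigl => t; rewrite inE.
Qed.

Lemma sum_ord (R : rcfType) (s : seq R) (p : pred R) :
  \sum_(x <- s | p x) x = \sum_(t < size s | p s`_t) s`_t.
Proof. by rewrite (big_nth 0) big_mkord. Qed.

Lemma sum_pred1 (R : rcfType) (I : finType) (u : I) (F : I -> R) :
  F u = \sum_(t | t == u) F t.
Proof. by rewrite big_pred1_eq. Qed.

Theorem proposition6 (R : rcfType) (m : nat) (J : seq R) :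
  (0 < m)%N ->
  (forall x, x \in J -> 0 <= x) ->
  simple_input J m ->
  forall (s : seq R), perm_eq s J ->
  forall (f : 'I_(size s) -> 'I_m), greedy_schedule f ->
  threshold J m <= min_load f.
Proof.
move=> hm hJ hsimp s hperm f hg.
have hs : forall t : 'I_(size s), 0 <= s`_t.
  by move=> t; apply: hJ; rewrite -(perm_mem hperm) mem_nth.
have hJt : forall t : 'I_(size J), 0 <= J`_t.
  by move=> t; apply: hJ; rewrite mem_nth.
set T := threshold J m.
have Lnn : forall i, 0 <= load f i by move=> i; apply: sumr_ge0 => t _; apply: hs.
have Ltot : forall i, load f i <= \sum_(x <- s) x.
  move=> i; rewrite (sum_ord _ s predT); apply: sum_sub => // t _; exact: hs.
suff HT : forall i, T <= load f i.
  rewrite /min_load; apply: le_bigmin => [|i _]; last exact: HT.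
  exact: le_trans (HT (Ordinal hm)) (Ltot _).
move=> i; rewrite leNgt; apply/negP => Hi.
have hr : 0 < root4 R m by rewrite /root4 !sqrtr_gt0 ltr0n.
case: (lerP (OPT J m) 0) => hO.
  have : T <= 0 by rewrite /T /threshold mulr_le0_ge0 // invr_ge0 mulr_ge0 // ltW.
  by have := Lnn i; lra.
have hT : 0 < T by rewrite /T /threshold divr_gt0 // mulr_gt0.
have LB : forall (t : nat) j, load_before f t j <= load f j.
  by move=> t j; apply: sum_sub => [u /andP[]|u _] //; apply: hs.
have G : forall t : 'I_(size s), load_before f t (f t) < T.
  by move=> t; apply: le_lt_trans (hg t i) (le_lt_trans (LB _ i) Hi).
have [g0 _ Hg0] : {g0 : {ffun 'I_(size J) -> 'I_m} | g0 \in predT & OPT J m = min_load g0}.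
  apply: (eq_bigmax [ffun=> Ordinal hm]) => // g _.
  rewrite /min_load; apply: le_bigmin => [|j _].
    by rewrite big_seq; apply: sumr_ge0 => x; apply: hJ.
  by apply: sumr_ge0 => t _; apply: hJt.
have Og : forall j, OPT J m <= load g0 j by move=> j; rewrite Hg0; apply: bigmin_le.
case: hsimp => [hn | [hk | hk]].
- have : ~~ [forall j : 'I_m, j \in codom g0].
    apply/negP => /forallP H.
    have : (#|'I_m| <= #|codom g0|)%N.
      by apply: subset_leq_card; apply/subsetP => j _; apply: H.
    have := card_size (codom g0); rewrite size_codom !card_ord => h1 h2.
    by have := leq_trans h2 h1; rewrite leqNgt hn.
  move/forallPn => [j Hj].
  have : load g0 j = 0.
    rewrite /load big_pred0 // => t; apply/negbTE; apply/eqP => e.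
    by move: Hj; rewrite -e codom_f.
  by have := Og j; lra.
- pose A := [set t : 'I_(size s) | T < s`_t].
  have cA : #|A| = num_large J m.
    by rewrite /num_large -(permP hperm) count_card.
  have inj : {in A &, injective f}.
    move=> t1 t2; rewrite !inE => h1 h2 e.
    have key : forall u v : 'I_(size s), (u < v)%N -> T < s`_u -> f u = f v -> False.
      move=> u v uv hu euv.
      have : s`_u <= load_before f v (f v).
        rewrite -euv (@sum_pred1 R _ u (fun t => s`_t)).
        apply: sum_sub => [t /eqP -> |t _]; last exact: hs.
        by rewrite uv eqxx.
      by have := G v; lra.
    case: (ltngtP t1 t2) => [lt|lt|/val_inj //].
      by case: (key _ _ lt h1 e).
    by case: (key _ _ lt h2 (esym e)).
  have sub : f @: A \subset [set~ i].
    apply/subsetP => _ /imsetP [t tA ->]; rewrite !inE; apply/eqP => e.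
    have : s`_t <= load f i.
      rewrite -e (@sum_pred1 R _ t (fun t => s`_t)).
      by apply: sum_sub => [u /eqP -> |u _]; [rewrite eqxx | exact: hs].
    by move: tA; rewrite inE => tA; lra.
  have := subset_leq_card sub; rewrite card_in_imset // cardsC1 card_ord cA.
  by move: hk hm; lia.
-
  have Up : \sum_(t < size s | s`_t <= T) s`_t < m%:R * (2 * T).
    rewrite (partition_big f predT) //=.
    apply: (@lt_le_trans _ _ (\sum_(j < m) (2 * T))); last first.
      rewrite sumr_const (_ : m%:R * (2 * T) = (2 * T) *+ #|'I_m|); first exact: lexx.
      by rewrite card_ord mulr_natl.
    apply: ltr_sum.
      by apply/hasP; exists (Ordinal hm); rewrite ?mem_index_enum.
    move=> j _.
    case: (pickP (fun t : 'I_(size s) => (s`_t <= T) && (f t == j))) => [t0 Pt0|none]; last first.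
      by rewrite big_pred0 // mulr_gt0.
    case: (@arg_maxnP _ t0 (fun t : 'I_(size s) => (s`_t <= T) && (f t == j)) (fun t : 'I_(size s) => nat_of_ord t) Pt0) => tm /andP[Stm /eqP Ftm] Hmax.
    rewrite (bigD1 tm) /=; last by rewrite Stm Ftm eqxx.
    have : \sum_(t < size s | ((s`_t <= T) && (f t == j)) && (t != tm)) s`_t
             <= load_before f tm (f tm).
      apply: sum_sub => [t /andP[/andP[St Ft] ntm]|t _]; last exact: hs.
      rewrite Ftm Ft andbT ltn_neqAle; apply/andP; split.
        by apply: contra ntm => /eqP e; apply/eqP/val_inj.
      by apply: Hmax; rewrite St.
    by have := G tm; lra.
  pose AJ := [set t : 'I_(size J) | T < J`_t].
  have cAJ : #|AJ| = num_large J m by rewrite /num_large count_card.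
  pose B := ~: (g0 @: AJ).
  have cB : (m <= num_large J m + #|B|)%N.
    have := cardsC (g0 @: AJ); rewrite card_ord -/B => e.
    have := leq_imset_card g0 AJ; rewrite cAJ; lia.
  have smallB : forall j t, j \in B -> g0 t == j -> J`_t <= T.
    move=> j t; rewrite inE => jB /eqP e; rewrite leNgt; apply/negP => lt.
    by move: jB; rewrite -e; apply/negP/negPn/imsetP; exists t; rewrite ?inE.
  have Lo : #|B|%:R * OPT J m <= \sum_(t < size s | s`_t <= T) s`_t.
    rewrite -(sum_ord _ s (fun x => x <= T)) (perm_big _ hperm) sum_ord.
    rewrite (partition_big g0 predT) //= mulr_natl -sumr_const.
    apply: (@le_trans _ _ (\sum_(j in B) \sum_(t < size J | (J`_t <= T) && (g0 t == j)) J`_t)).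
      apply: ler_sum => j jB; apply: le_trans (Og j) _.
      apply: sum_sub => [t tj|t _]; last exact: hJt.
      by rewrite tj (smallB j t jB tj).
    apply: sum_sub => // j _; apply: sumr_ge0 => t _; exact: hJt.
  have cBR : m%:R - (num_large J m)%:R <= #|B|%:R :> R.
    by have := cB; rewrite -(ler_nat R) natrD => h; lra.
  have e2 : m%:R * (2 * T) = m%:R / root4 R m / 50 * OPT J m.
    by rewrite /T /threshold; field; rewrite gt_eqF.
  have h3 : m%:R / root4 R m / 50 * OPT J m <= #|B|%:R * OPT J m.
    by apply: ler_wpM2r; [exact: ltW | lra].
  lra.
Qed.
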